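(* Let $\mathbf L$ be a coatomic algebraic lattice and let $\eta$ be an equa-interior operator on $\mathbf L$ satisfying \[ (\dagger)\qquad \tau(x)\le\tau(c)\ \&\ \eta(z)\le c\ \implies\ \eta(\eta(z)\vee\tau(x\wedge z))\le c \quad\text{for all }x,z,c\in L. \] Then $\mathbf L$ is bicoatomic.
   Context: An equa-interior operator on an algebraic lattice $\mathbf L$ is a map $\eta:L\to L$ such that for all $x,y,z\in L$: (I1) $\eta(x)\le x$; (I2) $x\ge y$ implies $\eta(x)\ge\eta(y)$; (I3) $\eta^2(x)=\eta(x)$; (I4) $\eta(1)=1$; (I5) if $\eta(x)=u$ for all $x\in X\subseteq L$ then $\eta(\bigvee X)=u$; (I6) $\eta(x)\vee(y\wedge z)=(\eta(x)\vee y)\wedge(\eta(x)\vee z)$; (I7) the image $\eta(L)$ is the complete join subsemilattice of $L$ generated by the elements of $\eta(L)$ that are compact in $\mathbf L$; (I8) there is a compact element $w\in L$ with $\eta(w)=w$ such that the interval $[w,1]$ is isomorphic to the congruence lattice of a join semilattice with $0$. Define $\tau(x)=\bigvee\{z\in L:\eta(z)=\eta(x)\}$. A lattice is coatomic if every element $x<1$ lies below a coatom. $\mathbf L$ is bicoatomic if whenever $p$ is a coatom and $p\ge u\wedge v$ properly (i.e., $p\ge u\wedge v$ but $p\not\ge u$ and $p\not\ge v$), there exist coatoms $c\ge u$ and $d\ge v$ with $p\ge c\wedge d$. *)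

(* Defs.v *)
From Stdlib Require Import List.

Record CLat := {
  carrier :> Type;
  le : carrier -> carrier -> Prop;
  sup : (carrier -> Prop) -> carrier;
  le_refl : forall x, le x x;
  le_trans : forall x y z, le x y -> le y z -> le x z;
  le_antisym : forall x y, le x y -> le y x -> x = y;
  sup_ub : forall (X : carrier -> Prop) x, X x -> le x (sup X);
  sup_least : forall (X : carrier -> Prop) u,
      (forall x, X x -> le x u) -> le (sup X) u
}.

Arguments le {c} _ _.
Arguments sup {c} _.

Section Ops.
Variable L : CLat.

Definition join (x y : L) : L := sup (fun z => z = x \/ z = y).
Definition meet (x y : L) : L := sup (fun z => le z x /\ le z y).
Definition top : L := sup (fun _ => True).

Definition compact (c : L) : Prop :=
  forall X : L -> Prop, le c (sup X) ->
    exists l : list L, (forall y, In y l -> X y) /\ le c (sup (fun y => In y l)).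

Definition algebraic : Prop :=
  forall x : L, x = sup (fun c => compact c /\ le c x).

Definition coatom (p : L) : Prop :=
  p <> top /\ forall y : L, le p y -> y = p \/ y = top.

Definition coatomic : Prop :=
  forall x : L, x <> top -> exists p, coatom p /\ le x p.

Definition bicoatomic : Prop :=
  forall p u v : L, coatom p -> le (meet u v) p -> ~ le u p -> ~ le v p ->
    exists c d : L, coatom c /\ coatom d /\ le u c /\ le v d /\ le (meet c d) p.

Definition tau (eta : L -> L) (x : L) : L := sup (fun z => eta z = eta x).

End Ops.

Arguments join {L} _ _.
Arguments meet {L} _ _.
Arguments top {L}.
Arguments compact {L} _.
Arguments coatom {L} _.
Arguments tau {L} _ _.

Record JSL0 := {
  jcar :> Type;
  jop : jcar -> jcar -> jcar;
  jzero : jcar;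
  jop_assoc : forall a b c, jop a (jop b c) = jop (jop a b) c;
  jop_comm : forall a b, jop a b = jop b a;
  jop_idem : forall a, jop a a = a;
  jop_zero : forall a, jop jzero a = a
}.

Definition congruence (S : JSL0) (R : S -> S -> Prop) : Prop :=
  (forall a, R a a) /\ (forall a b, R a b -> R b a) /\
  (forall a b c, R a b -> R b c -> R a c) /\
  (forall a b c d, R a b -> R c d -> R (jop S a c) (jop S b d)).

Definition rel_incl {S : Type} (R1 R2 : S -> S -> Prop) : Prop :=
  forall a b, R1 a b -> R2 a b.

Definition interval_iso_Con (L : CLat) (w : L) (S : JSL0) : Prop :=
  exists f : L -> (S -> S -> Prop),
    (forall y, le w y -> congruence S (f y)) /\
    (forall y1 y2, le w y1 -> le w y2 -> (le y1 y2 <-> rel_incl (f y1) (f y2))) /\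
    (forall R, congruence S R -> exists y, le w y /\ rel_incl (f y) R /\ rel_incl R (f y)).

Definition equa_interior (L : CLat) (eta : L -> L) : Prop :=
  (forall x, le (eta x) x) /\
  (forall x y, le y x -> le (eta y) (eta x)) /\
  (forall x, eta (eta x) = eta x) /\
  eta top = top /\
  (forall (X : L -> Prop) (u : L), (exists x, X x) ->
      (forall x, X x -> eta x = u) -> eta (sup X) = u) /\
  (forall x y z, join (eta x) (meet y z) = meet (join (eta x) y) (join (eta x) z)) /\
  (forall y : L, (exists x, eta x = y) <->
      exists X : L -> Prop,
        (forall g, X g -> (exists x, eta x = g) /\ compact g) /\ y = sup X) /\
  (exists w : L, compact w /\ eta w = w /\ exists S : JSL0, interval_iso_Con L w S).

(* Main.v *)
Require Import Defs.
From Stdlib Require Import Classical.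

Section Aux.
Variable L : CLat.

Lemma le_top (x : L) : le x top.
Proof. apply sup_ub; exact I. Qed.

Lemma join_l (x y : L) : le x (join x y).
Proof. apply sup_ub; auto. Qed.
Lemma join_r (x y : L) : le y (join x y).
Proof. apply sup_ub; auto. Qed.
Lemma join_least (x y z : L) : le x z -> le y z -> le (join x y) z.
Proof. intros; apply sup_least; intros w [->| ->]; auto. Qed.

Lemma meet_l (x y : L) : le (meet x y) x.
Proof. apply sup_least; intros w [H _]; auto. Qed.
Lemma meet_r (x y : L) : le (meet x y) y.
Proof. apply sup_least; intros w [_ H]; auto. Qed.
Lemma meet_glb (x y z : L) : le z x -> le z y -> le z (meet x y).
Proof. intros; apply sup_ub; auto. Qed.

Lemma meet_comm (x y : L) : meet x y = meet y x.
Proof.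
  apply le_antisym; apply meet_glb; (apply meet_l || apply meet_r).
Qed.

Lemma meet_absorb (u c v : L) : le u c -> meet u (meet c v) = meet u v.
Proof.
  intro H. apply le_antisym.
  - apply meet_glb. apply meet_l. eapply le_trans. apply meet_r. apply meet_r.
  - apply meet_glb. apply meet_l. apply meet_glb.
    eapply le_trans. apply meet_l. exact H. apply meet_r.
Qed.
End Aux.

Theorem theorem6p2 (L : CLat) (eta : L -> L) :
  algebraic L -> coatomic L -> equa_interior L eta ->
  (forall x z c : L, le (tau eta x) (tau eta c) -> le (eta z) c ->
     le (eta (join (eta z) (tau eta (meet x z)))) c) ->
  bicoatomic L.
Proof.
  intros _ Hco [I1 [I2 [I3 [I4 [I5 [I6 _]]]]]] Hd.
  assert (eta_tau : forall x, eta (tau eta x) = eta x).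
  { intro x. unfold tau. apply I5. exists x; reflexivity. auto. }
  assert (le_tau : forall x, le x (tau eta x)).
  { intro x. unfold tau. apply sup_ub. reflexivity. }
  assert (tau_eq : forall x y, eta x = eta y -> tau eta x = tau eta y).
  { intros x y H. unfold tau. rewrite H. reflexivity. }
  assert (top_le : forall x : L, le top x -> x = top).
  { intros x H. apply le_antisym; auto. apply le_top. }
  intros p u v Hp Huv Hu Hv.
  destruct Hp as [Hpt Hpmax].
  set (e := eta p).
  assert (He : le e p) by apply I1.
  assert (He3 : eta e = e) by apply I3.
  assert (tau_p : tau eta p = p).
  { destruct (Hpmax (tau eta p) (le_tau p)) as [H|H]; auto.
    exfalso. apply Hpt. apply top_le.
    rewrite <- H. eapply le_trans; [|apply (I1 p)].
    rewrite <- (eta_tau p), H, I4. apply le_refl. }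
  assert (LemL : forall u v c : L, c <> top -> le (tau eta u) (tau eta c) ->
            le u c -> le e c -> le e v -> le e u -> le (meet u v) p ->
            le (meet c v) p).
  { intros u0 v0 c Hct Htau Huc Hec Hev Heu Hm.
    set (y := meet c v0).
    assert (Hy : le (eta y) c).
    { eapply le_trans. apply I1. apply meet_l. }
    pose proof (Hd u0 y c Htau Hy) as H.
    unfold y in H. rewrite meet_absorb in H by exact Huc.
    assert (Heq : eta (meet u0 v0) = e).
    { apply le_antisym.
      - apply I2; exact Hm.
      - rewrite <- He3.
        apply I2. apply meet_glb; auto. }
    rewrite (tau_eq (meet u0 v0) p Heq), tau_p in H. fold y in H.
    assert (Hyp : le (eta y) p).
    { destruct (classic (le (eta y) p)) as [G|G]; auto.
      exfalso. destruct (Hpmax (join (eta y) p) (join_r _ _ _)) as [K|K].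
      - apply G. rewrite <- K. apply join_l.
      - rewrite K, I4 in H. apply Hct. apply top_le. exact H. }
    assert (Hey : eta y = e).
    { apply le_antisym.
      - rewrite <- (I3 y). apply I2. exact Hyp.
      - rewrite <- He3. apply I2.
        apply meet_glb; auto. }
    eapply le_trans. apply (le_tau y). rewrite (tau_eq y p Hey), tau_p.
    apply le_refl. }
  set (u' := join e u). set (v' := join e v).
  assert (Hm' : le (meet u' v') p).
  { unfold u', v', e. rewrite <- I6. apply join_least; auto. }
  assert (Hnt : forall a b : L, le (meet a b) p -> ~ le b p -> tau eta a <> top).
  { intros a b Hab Hb Ht. apply Hb.
    assert (Ha : a = top).
    { apply top_le. rewrite <- I4, <- Ht, eta_tau. apply I1. }
    eapply le_trans; [|exact Hab]. apply meet_glb; [|apply le_refl].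
    rewrite Ha. apply le_top. }
  assert (Hv' : ~ le v' p).
  { intro H. apply Hv. eapply le_trans; [apply join_r|exact H]. }
  assert (Hu' : ~ le u' p).
  { intro H. apply Hu. eapply le_trans; [apply join_r|exact H]. }
  destruct (Hco (tau eta u') (Hnt u' v' Hm' Hv')) as [c [Hcc Hc]].
  pose proof (proj1 Hcc) as Hct.
  rewrite meet_comm in Hm'.
  destruct (Hco (tau eta v') (Hnt v' u' Hm' Hu')) as [d [Hdc Hd']].
  pose proof (proj1 Hdc) as Hdt.
  rewrite meet_comm in Hm'.
  assert (Huc : le u' c) by (eapply le_trans; [apply le_tau|exact Hc]).
  assert (Hvd : le v' d) by (eapply le_trans; [apply le_tau|exact Hd']).
  assert (Hec : le e c) by (eapply le_trans; [apply join_l|exact Huc]).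
  assert (Hed : le e d) by (eapply le_trans; [apply join_l|exact Hvd]).
  assert (H1 : le (meet c v') p).
  { apply (LemL u' v' c Hct); auto.
    eapply le_trans; [exact Hc|apply le_tau]. apply join_l. apply join_l. }
  assert (H2 : le (meet d c) p).
  { apply (LemL v' c d Hdt); auto.
    eapply le_trans; [exact Hd'|apply le_tau]. apply join_l.
    rewrite meet_comm. exact H1. }
  exists c, d. split; [exact Hcc|]. split; [exact Hdc|].
  split. eapply le_trans; [apply join_r|exact Huc].
  split. eapply le_trans; [apply join_r|exact Hvd].
  rewrite meet_comm. exact H2.
Qed.
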